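(* Let $d\ge 2$. For each rank-one projector $\Pi$ on $\mathbb{C}^d$ define the map $\Phi_\Pi:{\cal L}(\mathbb{C}^d)\to{\cal L}(\mathbb{C}^d)$ by $\Phi_\Pi(X)=\Pi X\Pi$, and let $\Phi(X)=\frac{1}{d(d+1)}\big(({\rm tr}\,X)I+X\big)$. Suppose $\Phi=\sum_{i=1}^{n}\pi_i\Phi_{\Pi_i}$ for some $n\le d^2$, rank-one projectors $\Pi_1,\dots,\Pi_n$, and weights $\pi_i>0$ with $\sum_i\pi_i=1$. Then $n=d^2$, $\pi_i=\frac{1}{d^2}$ for all $i$, and ${\rm tr}(\Pi_i\Pi_j)=\frac{1}{d+1}$ for all $i\ne j$; that is, the $\Pi_i$ with weights $1/d^2$ form a SIC ensemble.
   Context: ${\cal L}(\mathbb{C}^d)$ is the space of linear operators on $\mathbb{C}^d$; $I$ is the identity. *)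

(* Defs.v *)
From HB Require Import structures.
From mathcomp Require Import all_boot all_order all_algebra.
From mathcomp Require Import reals.
From mathcomp.real_closed Require Import complex.
Set Implicit Arguments. Unset Strict Implicit. Unset Printing Implicit Defensive.
Import Order.TTheory GRing.Theory Num.Theory.
Local Open Scope ring_scope.
Local Open Scope complex_scope.

Definition adj (R : realType) (d : nat) (A : 'M[R[i]]_d) : 'M[R[i]]_d :=
  map_mx Num.conj (A^T).

Definition rank_one_projector (R : realType) (d : nat) (P : 'M[R[i]]_d) : Prop :=
  adj P = P /\ P *m P = P /\ \rank P = 1%N.

Definition PhiP (R : realType) (d : nat) (P X : 'M[R[i]]_d) : 'M[R[i]]_d :=
  P *m X *m P.

Definition PhiSIC (R : realType) (d : nat) (X : 'M[R[i]]_d) : 'M[R[i]]_d :=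
  ((d * (d + 1))%:R)^-1 *: ((\tr X)%:M + X).

(* Main.v *)
Require Import Defs.
From HB Require Import structures.
From mathcomp Require Import all_boot all_order all_algebra.
From mathcomp Require Import reals.
From mathcomp.real_closed Require Import complex.
Import Order.TTheory GRing.Theory Num.Theory.
Local Open Scope ring_scope.

Lemma rank1_factor (F : fieldType) (d : nat) (P : 'M[F]_d) :
  \rank P = 1%N -> exists (c : 'cV[F]_d) (r : 'rV[F]_d), P = c *m r.
Proof.
move=> hP; have := mulmx_base P.
move: (col_base P) (row_base P); rewrite hP => c r <-.
by exists c, r.
Qed.

Lemma proj_sandwich (F : fieldType) (d : nat) (P : 'M[F]_d) :
  P *m P = P -> \rank P = 1%N ->
  \tr P = 1 /\ forall X, P *m X *m P = \tr (P *m X) *: P.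
Proof.
move=> idem hP; have [c [r eP]] := rank1_factor _ _ _ hP.
have key : forall X : 'M[F]_d, P *m X *m P = \tr (P *m X) *: P.
  move=> X; rewrite eP.
  have e1 : c *m r *m X *m (c *m r) = c *m (r *m X *m c) *m r by rewrite !mulmxA.
  have e2 : \tr (c *m r *m X) = \tr (r *m X *m c) by rewrite -mulmxA mxtrace_mulC.
  rewrite e1 e2.
  rewrite [r *m X *m c]mx11_scalar mul_mx_scalar -scalemxAl.
  by rewrite mxtrace_scalar.
split=> //.
have := key 1%:M; rewrite mulmx1 idem => h.
have P0 : P != 0 by rewrite -mxrank_eq0 hP.
apply/eqP; rewrite -subr_eq0; apply/eqP.
have : (\tr P - 1) *: P = 0 by rewrite scalerBl -h scale1r subrr.
move/eqP; rewrite scaler_eq0 (negbTE P0) orbF => /eqP //.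
Qed.
From mathcomp Require Import ring.
Local Open Scope complex_scope.

Theorem theorem5 (R : realType) (d n : nat) (Pi : 'I_n -> 'M[R[i]]_d)
    (w : 'I_n -> R) :
  (2 <= d)%N ->
  (n <= d ^ 2)%N ->
  (forall k, rank_one_projector (Pi k)) ->
  (forall k, 0 < w k) ->
  \sum_(k < n) w k = 1 ->
  (forall X : 'M[R[i]]_d,
      PhiSIC X = \sum_(k < n) (w k)%:C *: PhiP (Pi k) X) ->
  [/\ n = (d ^ 2)%N,
      (forall k, w k = ((d ^ 2)%:R)^-1) &
      (forall k l, k != l -> \tr (Pi k *m Pi l) = ((d + 1)%:R)^-1)].
Proof.
move=> d2 nle proj wpos wsum HPhi.
have sand k : \tr (Pi k) = 1 /\ forall X, Pi k *m X *m Pi k = \tr (Pi k *m X) *: Pi k.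
  by have [_ [h1 h2]] := proj k; apply: proj_sandwich.
have idem k : Pi k *m Pi k = Pi k by have [_ [h1 h2]] := proj k.
have HPhi' X : PhiSIC X = \sum_k ((w k)%:C * \tr (Pi k *m X)) *: Pi k.
  by rewrite HPhi; apply: eq_bigr => k _; rewrite /PhiP (sand k).2 scalerA.
pose B := \matrix_(k < n) mxvec (Pi k) : 'M[R[i]]_(n, d * d).
have comb (c : 'rV[R[i]]_n) : c *m B = mxvec (\sum_k c 0 k *: Pi k).
  by rewrite mulmx_sum_row linear_sum; apply: eq_bigr => k _; rewrite rowK linearZ.
have dn0 : (d%:R : R[i]) != 0 by rewrite pnatr_eq0 -lt0n (leq_trans _ d2).
have d1n0 : (d%:R + 1 : R[i]) != 0.
  by rewrite natr1 pnatr_eq0.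
pose a := ((d * (d + 1))%:R : R[i]).
have ea : a = d%:R * (d%:R + 1) by rewrite /a natrM natrD.
have a0 : a != 0 by rewrite ea mulf_neq0.
have span Y : (mxvec Y <= B)%MS.
  pose X := a *: Y - (d%:R * \tr Y)%:M.
  have trX : \tr X = d%:R * \tr Y.
    rewrite /X linearB linearZ /= mxtrace_scalar -mulr_natr ea; ring.
  have eY : Y = PhiSIC X.
    by rewrite /PhiSIC trX /X addrC subrK scalerA mulVf ?scale1r.
  have -> : mxvec Y = (\row_k ((w k)%:C * \tr (Pi k *m X))) *m B.
    rewrite comb; congr mxvec; rewrite {1}eY HPhi'.
    by apply: eq_bigr => k _; rewrite mxE.
  exact: submxMl.
have full : row_full B.
  rewrite -sub1mx; apply/row_subP => i; rewrite -[row i _]vec_mxK; exact: span.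
have rk : \rank B = (d * d)%N := eqP full.
have nd : n = (d ^ 2)%N.
  by apply/eqP; rewrite eqn_leq nle /= -mulnn -rk rank_leq_row.
have free : row_free B by rewrite /row_free rk mulnn -nd.
have indep (c : 'I_n -> R[i]) : \sum_k c k *: Pi k = 0 -> forall k, c k = 0.
  move=> h k.
  have e : (\row_k c k) *m B = 0 *m B.
    rewrite mul0mx comb (eq_bigr (fun k => c k *: Pi k)) ?h ?linear0 // => j _.
    by rewrite mxE.
  by move/(row_free_inj free): e => /rowP/(_ k); rewrite !mxE.
have eI : (1%:M : 'M[R[i]]_d) = \sum_k (d%:R * (w k)%:C) *: Pi k.
  have := HPhi' 1%:M; rewrite /PhiSIC mxtrace1 -/a.
  rewrite (eq_bigr (fun k => (w k)%:C *: Pi k)); last first.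
    by move=> k _; rewrite mulmx1 (sand k).1 mulr1.
  have -> : (d%:R)%:M + 1%:M = (d%:R + 1) *: (1%:M : 'M[R[i]]_d).
    by rewrite scalerDl scale1r scalemx1.
  rewrite scalerA.
  have -> : (a^-1 * (d%:R + 1)) = d%:R^-1 by rewrite ea; field; rewrite d1n0 dn0.
  move=> h.
  rewrite (eq_bigr (fun k => d%:R *: ((w k)%:C *: Pi k))); last first.
    by move=> k _; rewrite scalerA.
  by rewrite -scaler_sumr -h scalerA mulfV // scale1r.
have coef j k : (w k)%:C * \tr (Pi k *m Pi j)
    - a^-1 * (d%:R * (w k)%:C + (k == j)%:R) = 0.
  move: k; apply: (indep (fun i => (w i)%:C * \tr (Pi i *m Pi j)
    - a^-1 * (d%:R * (w i)%:C + (i == j)%:R))).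
  rewrite (eq_bigr (fun k => ((w k)%:C * \tr (Pi k *m Pi j)) *: Pi k
     - a^-1 *: ((d%:R * (w k)%:C) *: Pi k + (k == j)%:R *: Pi k))); last first.
    by move=> k _ /=; rewrite scalerBl scalerDr !scalerA mulrDr scalerDl.
  rewrite sumrB -HPhi' -scaler_sumr big_split /= -eI.
  rewrite (bigD1 j) //= eqxx scale1r big1 ?addr0; last first.
    by move=> k /negbTE ->; rewrite scale0r.
  by rewrite /PhiSIC -/a (sand j).1 subrr.
split=> //.
  move=> k; have := coef k k; rewrite idem (sand k).1 eqxx mulr1 => h.
  apply: (fmorph_inj (real_complex R)).
  rewrite fmorphV rmorph_nat.
  have h2 : a * ((w k)%:C - a^-1 * (d%:R * (w k)%:C + 1)) = (w k)%:C * (d ^ 2)%:R - 1.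
    by rewrite ea natrX; field; rewrite d1n0 dn0.
  move: h2; rewrite h mulr0 => /eqP; rewrite eq_sym subr_eq0 => /eqP h3.
  have dd0 : ((d ^ 2)%:R : R[i]) != 0 by rewrite natrX expf_neq0.
  by rewrite -[LHS](mulfK dd0) h3 mul1r.
move=> k l kl; have := coef l k; rewrite (negbTE kl) addr0 => h.
have wk0 : (w k)%:C != 0.
  by rewrite (fmorph_eq0 (real_complex R)) gt_eqF // wpos.
have h2 : (w k)%:C * \tr (Pi k *m Pi l) - a^-1 * (d%:R * (w k)%:C)
   = (w k)%:C * (\tr (Pi k *m Pi l) - ((d + 1)%:R)^-1).
  by rewrite ea natrD; field; rewrite d1n0 dn0.
move: h; rewrite h2 => /eqP; rewrite mulf_eq0 (negbTE wk0) /= subr_eq0 => /eqP //.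
Qed.
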